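(* Let $(\varphi_\alpha)_{\alpha>0}$ be a non-linear regularizing filter satisfying Assumption B, let $(\delta_k)_k,(\alpha_k)_k$ be positive null sequences with $\delta_k^2/\alpha_k\to0$, and let $y\in\operatorname{ran}(\mathbf{A})$ with $\mathbf{T}_v^*(y)\in\operatorname{ran}(\Phi_{\tilde\alpha,\kappa})$ for some $\tilde\alpha>0$. Let $(y^k)_k$ be a sequence in $\mathbb{Y}$ with $\|y^k-y\|\le\delta_k$. Then $\mathbf{B}_{\alpha_k}(y^k)\rightharpoonup\mathbf{A}^+y$ weakly in $\mathbb{X}$ as $k\to\infty$.
   Context: $\mathbb{X},\mathbb{Y}$ are real Hilbert spaces and $\mathbf{A}\colon\mathbb{X}\to\mathbb{Y}$ is bounded linear with Moore–Penrose inverse $\mathbf{A}^+$. $\Lambda$ is an at most countable index set. A diagonal frame decomposition (DFD) of $\mathbf{A}$ is a triple $(u_\lambda,v_\lambda,\kappa_\lambda)_{\lambda\in\Lambda}$ such that $(u_\lambda)$ is a frame of $\ker(\mathbf{A})^\perp$, $(v_\lambda)$ is a frame of $\overline{\operatorname{ran}(\mathbf{A})}$, and $\kappa_\lambda>0$ with $\mathbf{A}^*v_\lambda=\kappa_\lambda u_\lambda$ for all $\lambda$; we fix such a DFD with $\sup_\lambda\kappa_\lambda<\infty$. $(\bar u_\lambda)$ is a dual frame of $(u_\lambda)$, i.e. $x=\sum_\lambda\langle x,u_\lambda\rangle\bar u_\lambda$ for all $x\in\ker(\mathbf{A})^\perp$. $\mathbf{T}_{\bar u}\colon\ell^2(\Lambda)\to\mathbb{X}$,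 $(c_\lambda)\mapsto\sum_\lambda c_\lambda\bar u_\lambda$, and $\mathbf{T}_v^*\colon\mathbb{Y}\to\ell^2(\Lambda)$, $y\mapsto(\langle y,v_\lambda\rangle)_\lambda$. $\mathbf{M}_\kappa\colon\ell^2(\Lambda)\to\ell^2(\Lambda)$, $(x_\lambda)\mapsto(\kappa_\lambda x_\lambda)$; $\mathbf{M}_\kappa^+$ is its Moore–Penrose inverse, with domain $\{(c_\lambda)\in\ell^2:(c_\lambda/\kappa_\lambda)\in\ell^2\}$ and $\mathbf{M}_\kappa^+((c_\lambda))=(c_\lambda/\kappa_\lambda)$. A non-linear regularizing filter is a family $(\varphi_\alpha)_{\alpha>0}$ of functions $\varphi_\alpha\colon(0,\infty)\times\mathbb{R}\to\mathbb{R}$ such that for all $\alpha,\kappa>0$: (F1) $\varphi_\alpha(\kappa,\cdot)$ is non-decreasing; (F2) $\varphi_\alpha(\kappa,\cdot)$ is 1-Lipschitz; (F3) $\varphi_\alpha(\kappa,0)=0$; (F4) $\lim_{\alpha\to0}\varphi_\alpha(\kappa,c)=c$ for all $c\in\mathbb{R}$. $\Phi_{\alpha,\kappa}\colon\ell^2(\Lambda)\to\ell^2(\Lambda)$, $(c_\lambda)\mapsto(\varphi_\alpha(\kappa_\lambda,c_\lambda))_\lambda$. Non-linear filtered DFD: $\operatorname{dom}(\mathbf{B}_\alpha)=\{y\in\mathbb{Y}:\Phi_{\alpha,\kappa}(\mathbf{T}_v^*y)\in\operatorname{dom}(\mathbf{M}_\kappa^+)\}$ and $\mathbf{B}_\alpha(y)=\sum_\lambda\kappa_\lambda^{-1}\varphi_\alpha(\kappa_\lambda,\langle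 y,v_\lambda\rangle)\bar u_\lambda=\mathbf{T}_{\bar u}\circ\mathbf{M}_\kappa^+\circ\Phi_{\alpha,\kappa}\circ\mathbf{T}_v^*(y)$. Assumption B: (B1) for all $\kappa>0$ and $x\in\mathbb{R}$, $(|\varphi_\alpha(\kappa,x)|)_{\alpha>0}$ is monotonically increasing as $\alpha\downarrow0$; (B2) there exist $d,e>0$ such that for all $\kappa,\alpha>0$, $x\in\mathbb{R}$: $|x|\le d\alpha/\kappa\Rightarrow|\varphi_\alpha(\kappa,x)|\le\frac{e\kappa}{\sqrt\alpha}|x|$. *)

(* Defs.v *)
From HB Require Import structures.
From mathcomp Require Import all_boot all_order all_algebra finmap.
From mathcomp Require Import all_classical all_reals all_analysis.
Set Implicit Arguments. Unset Strict Implicit. Unset Printing Implicit Defensive.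
Import Order.TTheory GRing.Theory Num.Theory.
Import numFieldNormedType.Exports.
Local Open Scope classical_set_scope.
Local Open Scope ring_scope.

(* [ip] is an inner product on the normed space V inducing its norm.
   A real Hilbert space = (V : completeNormedModType R) with such an [ip]. *)
Definition inner_product {R : realType} {V : normedModType R}
  (ip : V -> V -> R) : Prop :=
  [/\ (forall x y, ip x y = ip y x),
      (forall (a : R) x y z, ip (a *: x + y) z = a * ip x z + ip y z)
    & (forall x, ip x x = `|x| ^+ 2)].

(* weak convergence in a Hilbert space (Riesz: tested against all z) *)
Definition weak_cvg {R : realType} {V : normedModType R}
  (ip : V -> V -> R) (u : nat -> V) (x : V) : Prop :=
  forall z, (fun k => ip (u k) z) @ \oo --> ip x z.

Section totally.
Local Open Scope fset_scope.
Definition totally {I : choiceType} : set_system {fset I} :=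
  filter_from setT (fun A => [set B | A `<=` B]).

Instance totally_filter {I : choiceType} : ProperFilter (@totally I).
Proof.
eapply filter_from_proper; last by move=> A _; exists A; rewrite /= fsubset_refl.
apply: filter_fromT_filter; first by exists fset0.
by move=> A B /=; exists (A `|` B) => P /=; rewrite fsubUset => /andP[].
Qed.
End totally.

Definition HasSum {R : realType} {V : normedModType R} {I : choiceType}
  (f : I -> V) (x : V) : Prop :=
  (fun A : {fset I} => \sum_(i <- A) f i) @ totally --> x.

Definition in_l2 {R : realType} {I : choiceType} (c : I -> R) : Prop :=
  (\esum_(i in [set: I]) ((c i) ^+ 2)%:E < +oo)%E.

Definition kerperp {R : realType} {X Y : normedModType R}
  (ipX : X -> X -> R) (A : X -> Y) : set X :=
  [set x | forall z, A z = 0 -> ipX x z = 0].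

Definition closed_range {R : realType} {X Y : normedModType R}
  (A : X -> Y) : set Y := closure (range A).

Definition is_frame {R : realType} {V : normedModType R} {I : choiceType}
  (ip : V -> V -> R) (S : set V) (u : I -> V) : Prop :=
  (forall i, S (u i)) /\
  exists a b : R, [/\ 0 < a, 0 < b &
    forall x, S x ->
      ((a * `|x| ^+ 2)%:E <= \esum_(i in [set: I]) ((ip x (u i)) ^+ 2)%:E /\
       \esum_(i in [set: I]) ((ip x (u i)) ^+ 2)%:E <= (b * `|x| ^+ 2)%:E)%E].

Definition is_DFD {R : realType} {X Y : normedModType R} {I : choiceType}
  (ipX : X -> X -> R) (ipY : Y -> Y -> R) (A : X -> Y)
  (u : I -> X) (v : I -> Y) (kappa : I -> R) : Prop :=
  [/\ is_frame ipX (kerperp ipX A) u,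
      is_frame ipY (closed_range A) v,
      (forall i, 0 < kappa i)
    & (* A^* v_i = kappa_i u_i, written through the defining identity of A^* *)
      (forall i x, ipY (A x) (v i) = kappa i * ipX x (u i))].

Definition is_dual_frame {R : realType} {X : normedModType R} {I : choiceType}
  (ipX : X -> X -> R) (S : set X) (u ubar : I -> X) : Prop :=
  is_frame ipX S ubar /\
  forall x, S x -> HasSum (fun i => ipX x (u i) *: ubar i) x.

(* Moore-Penrose inverse on ran(A): A^+ y is the unique x in ker(A)^perp
   with A x = y.  [MP_value A y x] means x = A^+ y  (for y in ran A). *)
Definition MP_value {R : realType} {X Y : normedModType R}
  (ipX : X -> X -> R) (A : X -> Y) (y : Y) (x : X) : Prop :=
  kerperp ipX A x /\ A x = y.

(* phi alpha kappa c = varphi_alpha(kappa, c) *)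
Definition nonlinear_reg_filter {R : realType} (phi : R -> R -> R -> R) : Prop :=
  forall alpha kappa, 0 < alpha -> 0 < kappa ->
  [/\ {homo phi alpha kappa : s t / s <= t},
      (forall s t, `|phi alpha kappa s - phi alpha kappa t| <= `|s - t|),
      phi alpha kappa 0 = 0
    & (forall c, phi^~ kappa ^~ c @ 0^'+ --> c)].

Definition assumption_B {R : realType} (phi : R -> R -> R -> R) : Prop :=
  (forall kappa x alpha beta, 0 < kappa -> 0 < alpha -> alpha <= beta ->
     `|phi beta kappa x| <= `|phi alpha kappa x|) /\
  exists d e : R, [/\ 0 < d, 0 < e &
    forall kappa alpha x, 0 < kappa -> 0 < alpha ->
      `|x| <= d * alpha / kappa ->
      `|phi alpha kappa x| <= e * kappa / Num.sqrt alpha * `|x|].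

Definition B_dom {R : realType} {Y : normedModType R} {I : choiceType}
  (ipY : Y -> Y -> R) (v : I -> Y) (kappa : I -> R)
  (phi : R -> R -> R -> R) (alpha : R) (y : Y) : Prop :=
  in_l2 (fun i => phi alpha (kappa i) (ipY y (v i))) /\
  in_l2 (fun i => (kappa i)^-1 * phi alpha (kappa i) (ipY y (v i))).

(* [B_value ... alpha y x] means  y in dom(B_alpha) and B_alpha(y) = x *)
Definition B_value {R : realType} {X Y : normedModType R} {I : choiceType}
  (ipY : Y -> Y -> R) (ubar : I -> X) (v : I -> Y) (kappa : I -> R)
  (phi : R -> R -> R -> R) (alpha : R) (y : Y) (x : X) : Prop :=
  B_dom ipY v kappa phi alpha y /\
  HasSum (fun i => ((kappa i)^-1 * phi alpha (kappa i) (ipY y (v i))) *: ubar i) x.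

(* Main.v *)
Require Import Defs.
From HB Require Import structures.
From mathcomp Require Import all_boot all_order all_algebra finmap.
From mathcomp Require Import all_classical all_reals all_analysis.
From mathcomp Require Import ring lra.
Import Order.TTheory GRing.Theory Num.Theory.
Import numFieldNormedType.Exports.
Local Open Scope classical_set_scope.
Local Open Scope ring_scope.
Set Implicit Arguments. Unset Strict Implicit. Unset Printing Implicit Defensive.

Lemma quadCS (R : realType) (A B C : R) : 0 <= C ->
  (forall t, 0 <= A - 2 * t * B + t ^+ 2 * C) -> B ^+ 2 <= A * C.
Proof.
move=> C0 H.
have A0 : 0 <= A by have := H 0; rewrite !(mul0r, mulr0, expr0n) /=; lra.
have [Cz|Cp] := eqVneq C 0.
  have [Bz|Bn] := eqVneq B 0; first by rewrite Bz Cz; nra.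
  have := H ((A + 1) / (2 * B)).
  have -> : A - 2 * ((A + 1) / (2 * B)) * B + ((A + 1) / (2 * B)) ^+ 2 * C = -1.
    by rewrite Cz; field; rewrite Bn.
  lra.
have Cpos : 0 < C by rewrite lt_def Cp C0.
have := H (B / C).
have -> : A - 2 * (B / C) * B + (B / C) ^+ 2 * C = (A * C - B ^+ 2) / C.
  by field.
by rewrite pmulr_lge0 ?invr_gt0 // subr_ge0.
Qed.

Section IP.
Variables (R : realType) (V : normedModType R) (ip : V -> V -> R).
Hypothesis Hip : inner_product ip.

Lemma ipC x y : ip x y = ip y x. Proof. by case: Hip. Qed.
Lemma ipL a x y z : ip (a *: x + y) z = a * ip x z + ip y z. Proof. by case: Hip. Qed.
Lemma ipxx x : ip x x = `|x| ^+ 2. Proof. by case: Hip. Qed.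
Lemma ip0l z : ip 0 z = 0.
Proof. have := ipL 1 0 0 z; rewrite scaler0 addr0 mul1r; lra. Qed.
Lemma ipDl x y z : ip (x + y) z = ip x z + ip y z.
Proof. by rewrite -(scale1r x) ipL mul1r scale1r. Qed.
Lemma ipZl a x z : ip (a *: x) z = a * ip x z.
Proof. by rewrite -(addr0 (a *: x)) ipL ip0l addr0. Qed.
Lemma ipNl x z : ip (- x) z = - ip x z.
Proof. by rewrite -scaleN1r ipZl mulN1r. Qed.
Lemma ipBl x y z : ip (x - y) z = ip x z - ip y z.
Proof. by rewrite ipDl ipNl. Qed.
Lemma ipDr x y z : ip z (x + y) = ip z x + ip z y.
Proof. by rewrite ipC ipDl !(ipC z). Qed.
Lemma ipZr a x z : ip z (a *: x) = a * ip z x.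
Proof. by rewrite ipC ipZl ipC. Qed.
Lemma ipBr x y z : ip z (x - y) = ip z x - ip z y.
Proof. by rewrite ipC ipBl !(ipC z). Qed.
Lemma ip_suml (J : Type) (s : seq J) (f : J -> V) z :
  ip (\sum_(i <- s) f i) z = \sum_(i <- s) ip (f i) z.
Proof. by elim: s => [|a s IH]; rewrite ?big_nil ?ip0l // !big_cons ipDl IH. Qed.

Lemma ipCS2 x y : ip x y ^+ 2 <= `|x| ^+ 2 * `|y| ^+ 2.
Proof.
apply: quadCS; first exact: sqr_ge0.
move=> t; have := normr_ge0 (x - t *: y); move=> _.
have h : 0 <= ip (x - t *: y) (x - t *: y) by rewrite ipxx sqr_ge0.
move: h; rewrite ipBl !ipBr !ipZl !ipZr !ipxx (ipC y x).
move=> h; nra.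
Qed.

Lemma ipCS x y : `|ip x y| <= `|x| * `|y|.
Proof.
have := ipCS2 x y; rewrite -exprMn -real_normK ?num_real // => h.
by rewrite -(ler_pXn2r (_ : 0 < 2)%N) ?nnegrE ?mulr_ge0.
Qed.
End IP.

Lemma sumCS2 (R : realType) (J : Type) (s : seq J) (a b : J -> R) :
  (\sum_(i <- s) a i * b i) ^+ 2 <=
  (\sum_(i <- s) a i ^+ 2) * (\sum_(i <- s) b i ^+ 2).
Proof.
apply: quadCS; first by apply: sumr_ge0 => i _; exact: sqr_ge0.
move=> t.
have -> : \sum_(i <- s) a i ^+ 2 - 2 * t * (\sum_(i <- s) a i * b i) +
   t ^+ 2 * (\sum_(i <- s) b i ^+ 2) = \sum_(i <- s) (a i - t * b i) ^+ 2.
  rewrite !mulr_sumr -sumrB -big_split /=; apply: eq_bigr => i _; ring.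
by apply: sumr_ge0 => i _; exact: sqr_ge0.
Qed.

Lemma sq_le1 (R : realType) (x K : R) : x ^+ 2 <= K -> x <= 1 + K.
Proof. move=> h; nra. Qed.

Section FS.
Variables (R : realType) (I : choiceType).

Lemma fsum_sub (p : I -> R) (A B : {fset I}) : (forall i, 0 <= p i) ->
  (A `<=` B)%fset -> \sum_(i <- A) p i <= \sum_(i <- B) p i.
Proof.
move=> p0 AB; rewrite (big_fsetID _ (mem A) B) /=.
have -> : \sum_(i <- [fset x in B | x \in A]%fset) p i = \sum_(i <- A) p i.
  apply: eq_fbigl => i; rewrite !inE /=; apply/andP/idP => [[]//|iA].
  by split=> //; apply: (fsubsetP AB).
by rewrite lerDl sumr_ge0.
Qed.

Lemma fsum_split (p : I -> R) (G F0 : {fset I}) :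
  \sum_(i <- (G `|` F0)%fset) p i =
  \sum_(i <- F0) p i + \sum_(i <- G | i \notin F0) p i.
Proof.
rewrite (big_fsetID _ (mem F0) (G `|` F0)%fset) /=.
have -> : \sum_(i <- [fset x in (G `|` F0)%fset | x \in F0]%fset) p i = \sum_(i <- F0) p i.
  apply: eq_fbigl => i; rewrite !inE /=; apply/andP/idP => [[]//|iA].
  by rewrite iA orbT.
have -> : \sum_(i <- [fset x in (G `|` F0)%fset | x \notin F0]%fset) p i =
   \sum_(i <- G | i \notin F0) p i.
  rewrite [RHS]big_fset_condE; apply: eq_fbigl => i; rewrite !inE /=.
  by case: (i \in F0); rewrite ?andbF ?andbT ?orbF.
by [].
Qed.

Lemma tail_small (p : I -> R) (M : R) : (forall i, 0 <= p i) ->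
  (forall F : {fset I}, \sum_(i <- F) p i <= M) ->
  forall eps, 0 < eps -> exists F0 : {fset I},
    forall G : {fset I}, \sum_(i <- G | i \notin F0) p i <= eps.
Proof.
move=> p0 pM eps e0.
pose E := [set x : R | exists F : {fset I}, x = \sum_(i <- F) p i].
have hs : has_sup E.
  split; first by exists (\sum_(i <- fset0) p i); exists fset0%fset.
  by exists M => _ [F ->].
have [_ [F0 ->] h] := sup_adherent e0 hs.
exists F0 => G.
have := sup_upper_bound hs (ex_intro _ (G `|` F0)%fset erefl).
rewrite fsum_split; lra.
Qed.

Definition l2b (c : I -> R) (M : R) :=
  forall F : {fset I}, \sum_(i <- F) c i ^+ 2 <= M.

Lemma in_l2_l2b (c : I -> R) : in_l2 c -> exists M, l2b c M.
Proof.
rewrite /in_l2 => h.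
have h0 : (0 <= \esum_(i in [set: I]) ((c i) ^+ 2)%:E)%E.
  by apply: esum_ge0 => i _; rewrite lee_fin sqr_ge0.
exists (fine (\esum_(i in [set: I]) ((c i) ^+ 2)%:E)) => F.
rewrite -lee_fin fineK; last by rewrite ge0_fin_numE.
apply: esum_ge; exists [set` F]; first by split => //; exact: finite_fset.
by rewrite fsbig_finite //= set_fsetK sumEFin.
Qed.

Lemma l2b_in_l2 (c : I -> R) M : l2b c M -> in_l2 c.
Proof.
move=> h; rewrite /in_l2; apply: (@le_lt_trans _ _ M%:E); last exact: ltry.
apply: ge_ereal_sup => _ [X [finX _] <-].
by rewrite fsbig_finite //= sumEFin lee_fin.
Qed.
End FS.

Section Frames.
Variables (R : realType) (V : normedModType R) (ip : V -> V -> R).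
Hypothesis Hip : inner_product ip.
Variable (I : choiceType).

Definition subsp (S : set V) := S 0 /\ forall a x y, S x -> S y -> S (a *: x + y).

Lemma frame_ub (S : set V) (u : I -> V) : is_frame ip S u ->
  exists b, 0 < b /\ forall x, S x -> forall F : {fset I},
    \sum_(i <- F) ip x (u i) ^+ 2 <= b * `|x| ^+ 2.
Proof.
case=> _ [a [b [a0 b0 h]]]; exists b; split => // x Sx F.
have [_ h2] := h x Sx; rewrite -lee_fin; apply: le_trans h2.
apply: esum_ge; exists [set` F]; first by split => //; exact: finite_fset.
by rewrite fsbig_finite //= set_fsetK sumEFin.
Qed.

Lemma subsp_sum (S : set V) (u : I -> V) (c : I -> R) (s : seq I) :
  subsp S -> (forall i, S (u i)) -> S (\sum_(i <- s) c i *: u i).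
Proof.
move=> [S0 SL] Su; elim: s => [|j s IH]; first by rewrite big_nil.
by rewrite big_cons; apply: SL.
Qed.

Variables (S : set V) (u : I -> V) (b : R).
Hypotheses (subS : subsp S) (Su : forall i, S (u i)) (b0 : 0 <= b)
  (ub : forall x, S x -> forall F : {fset I}, \sum_(i <- F) ip x (u i) ^+ 2 <= b * `|x| ^+ 2).

Lemma synth (c : I -> R) (F : {fset I}) :
  `|\sum_(i <- F) c i *: u i| ^+ 2 <= b * \sum_(i <- F) c i ^+ 2.
Proof.
set s := \sum_(i <- F) c i *: u i.
have Ss : S s by apply: subsp_sum.
have e : `|s| ^+ 2 = \sum_(i <- F) c i * ip s (u i).
  rewrite -(ipxx Hip) {1}/s (ip_suml Hip); apply: eq_bigr => i _.
  by rewrite (ipZl Hip) (ipC Hip).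
have h1 := sumCS2 F c (fun i => ip s (u i)).
rewrite -e in h1; have h2 := ub Ss F.
have C0 : 0 <= \sum_(i <- F) c i ^+ 2 by apply: sumr_ge0 => i _; exact: sqr_ge0.
have s0 : 0 <= `|s| ^+ 2 by exact: sqr_ge0.
have h3 : (`|s| ^+ 2) ^+ 2 <= (b * \sum_(i <- F) c i ^+ 2) * `|s| ^+ 2.
  apply: le_trans h1 _; have := ler_wpM2l C0 h2; nra.
have [->|sp] := eqVneq (`|s| ^+ 2) 0; first by rewrite mulr_ge0.
have sp' : 0 < `|s| ^+ 2 by rewrite lt_def sp s0.
by move: h3; rewrite expr2 ler_pM2r.
Qed.

Lemma bessel (z : V) (F : {fset I}) :
  \sum_(i <- F) ip z (u i) ^+ 2 <= b * `|z| ^+ 2.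
Proof.
set W := \sum_(i <- F) ip z (u i) ^+ 2.
set s := \sum_(i <- F) ip z (u i) *: u i.
have e : W = ip z s.
  rewrite /s (ipC Hip) (ip_suml Hip) /W; apply: eq_bigr => i _.
  by rewrite (ipZl Hip) (ipC Hip) expr2.
have h1 := ipCS2 Hip z s; rewrite -e in h1.
have h2 := synth (fun i => ip z (u i)) F; rewrite -/s -/W in h2.
have W0 : 0 <= W by apply: sumr_ge0 => i _; exact: sqr_ge0.
have z0 : 0 <= `|z| ^+ 2 by exact: sqr_ge0.
have h3 : W ^+ 2 <= (b * `|z| ^+ 2) * W.
  apply: le_trans h1 _; have := ler_wpM2l z0 h2; nra.
have [->|sp] := eqVneq W 0; first by rewrite mulr_ge0.
have sp' : 0 < W by rewrite lt_def sp W0.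
by move: h3; rewrite expr2 ler_pM2r.
Qed.
End Frames.

Lemma kerperp_subsp (R : realType) (X Y : normedModType R) (ipX : X -> X -> R)
  (A : X -> Y) : inner_product ipX -> subsp (kerperp ipX A).
Proof.
move=> Hip; split; first by move=> z _; rewrite (ip0l Hip).
by move=> a x y Kx Ky z Az; rewrite (ipL Hip) Kx // Ky // mulr0 addr0.
Qed.

Lemma closP (R : realType) (V : normedModType R) (E : set V) p :
  closure E p <-> forall e, 0 < e -> exists a, E a /\ `|p - a| < e.
Proof.
split.
  move=> h e e0; have : nbhs p (ball p e) by apply/nbhs_ballP; exists e.
  by move=> /h [a [Ea]]; rewrite -ball_normE => pa; exists a.
move=> h B /nbhs_ballP [e e0 sB]; have [a [Ea pa]] := h e e0.
by exists a; split => //; apply: sB; rewrite -ball_normE.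
Qed.

Lemma closed_range_subsp (R : realType) (X Y : normedModType R)
  (A : {linear X -> Y}) : subsp (closed_range A).
Proof.
split; first by apply: subset_closure; exists 0 => //; rewrite linear0.
move=> a p q /closP Cp /closP Cq; apply/closP => e e0.
have e1 : 0 < e / (2 * (`|a| + 1)) by rewrite divr_gt0 // mulr_gt0 // ltr_pwDr.
have e2 : 0 < e / 2 by rewrite divr_gt0.
have [_ [[xp _ <-] hp]] := Cp _ e1.
have [_ [[xq _ <-] hq]] := Cq _ e2.
exists (A (a *: xp + xq)); split; first by exists (a *: xp + xq).
rewrite linearD linearZ /=.
have -> : a *: p + q - (a *: A xp + A xq) = a *: (p - A xp) + (q - A xq).
  by rewrite scalerBr opprD addrACA.
apply: (le_lt_trans (ler_normD _ _)); rewrite normrZ.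
have ha : `|a| * `|p - A xp| <= `|a| * (e / (2 * (`|a| + 1))).
  by apply: ler_wpM2l => //; exact: ltW.
have hb : `|a| * (e / (2 * (`|a| + 1))) <= e / 2.
  have a1 : 0 < `|a| + 1 by rewrite ltr_pwDr.
  have -> : `|a| * (e / (2 * (`|a| + 1))) = (e / 2) * (`|a| / (`|a| + 1)).
    by field; rewrite gt_eqF.
  apply: ler_piMr; first exact: ltW.
  by rewrite ler_pdivrMr // mul1r lerDl.
have : e / 2 + e / 2 = e by field.
lra.
Qed.

Section Scal.
Variable R : realType.
Variables (d e ta K : R).
Hypotheses (d0 : 0 < d) (e0 : 0 < e) (ta0 : 0 < ta) (K0 : 0 <= K).

Definition C1 := 1 + e ^+ 2 + 2 * e * K / (d * Num.sqrt ta).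
Definition C2 := 4 / d ^+ 2.
Definition C3 := (K / (d * ta)) ^+ 2.
Definition Qb (a n : R) := n ^+ 2 * (C1 / a + C3) + n ^+ 4 * (C2 / a ^+ 2).

Lemma C1_ge : 1 + e ^+ 2 <= C1.
Proof. by rewrite /C1 lerDl divr_ge0 // ?mulr_ge0 // ?ltW // sqrtr_ge0. Qed.
Lemma C2_ge : 0 <= C2. Proof. by rewrite /C2 divr_ge0 // sqr_ge0. Qed.
Lemma C3_ge : 0 <= C3. Proof. exact: sqr_ge0. Qed.

Lemma C1_ge0 : 0 <= C1.
Proof. have := C1_ge; have := sqr_ge0 e; lra. Qed.

Lemma Qb_ge a n : 0 < a -> 0 <= Qb a n.
Proof.
move=> a0; have := C1_ge0; have := C2_ge; have := C3_ge => h3 h2 h1.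
have q1 : 0 <= C1 / a by rewrite divr_ge0 // ltW.
have q2 : 0 <= C2 / a ^+ 2 by rewrite divr_ge0 // sqr_ge0.
rewrite /Qb addr_ge0 // mulr_ge0 ?sqr_ge0 ?addr_ge0 //.
by rewrite exprn_even_ge0.
Qed.

Lemma scalar_bound (a k y n c P P0 : R) : 0 < a -> 0 < k ->
  `|P| <= `|y + n| -> `|P0| <= `|y| -> `|P - P0| <= `|n| ->
  (`|y + n| <= d * a / k -> `|P| <= e * k / Num.sqrt a * `|y + n|) ->
  (`|c| <= d * ta / k -> `|y| <= e * k / Num.sqrt ta * `|c|) ->
  `|c| <= K ->
  exists g, [/\ 0 <= g, g ^+ 2 <= Qb a n &
     `|(P - y) / k| <= (e + 2) * `|y / k| + g].
Proof.
move=> a0 k0 hP hP0 hPL hB hBt hc.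
set r := Num.sqrt a; have r0 : 0 < r by rewrite sqrtr_gt0.
have rr : r ^+ 2 = a by rewrite sqr_sqrtr // ltW.
set s := Num.sqrt ta; have s0 : 0 < s by rewrite sqrtr_gt0.
set w := k^-1; have kw : k * w = 1 by rewrite divff // gt_eqF.
have w0 : 0 < w by rewrite invr_gt0.
have hC1 := C1_ge; have hC2 := C2_ge; have hC3 := C3_ge.
have n2 : 0 <= n ^+ 2 := sqr_ge0 n.
have n4 : 0 <= n ^+ 4 by rewrite exprn_even_ge0.
have ia : 0 < a^-1 by rewrite invr_gt0.
suff [g [g0 gQ gE]] : exists g, [/\ 0 <= g, g ^+ 2 <= Qb a n &
     `|P - y| <= (e + 2) * `|y| + g * k].
  exists g; split => //.
  rewrite normrM (normrM y) normfV (gtr0_norm k0).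
  have -> : (e + 2) * (`|y| * k^-1) + g = ((e + 2) * `|y| + g * k) * k^-1.
    by field; rewrite gt_eqF.
  by rewrite ler_pM2r // invr_gt0.
have C1a : (1 + e ^+ 2) * a^-1 <= C1 / a by rewrite ler_pM2r.
have C3n : 0 <= n ^+ 2 * C3 by rewrite mulr_ge0.
have C2n : 0 <= n ^+ 4 * (C2 / a ^+ 2) by rewrite mulr_ge0 // divr_ge0 // sqr_ge0.
have e2 : 0 <= e ^+ 2 := sqr_ge0 e.
have ny : `|y + n| <= `|y| + `|n| := ler_normD y n.
have ny0 := normr_ge0 y; have nn0 := normr_ge0 n.
have nn2 : `|n| ^+ 2 = n ^+ 2 by rewrite real_normK ?num_real.
have [hyn|hyn] := leP `|y + n| (d * a / k); last first.
-
  exists (`|n| * w); split; first by rewrite mulr_ge0 // ltW.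
    have hyn' : d * a * w < `|y + n| by [].
    have da0 : 0 < d * a by rewrite mulr_gt0.
    have Qb1 : n ^+ 2 * (C1 / a) <= Qb a n.
      rewrite /Qb mulrDr -addrA lerDl; exact: addr_ge0.
    have C1b : (1 + e ^+ 2) / a <= C1 / a := C1a.
    have [ny1|ny1] := leP `|y| `|n|.
    +
      have W : w <= 2 * `|n| / (d * a).
        rewrite ler_pdivlMr // mulrC; apply: ltW; lra.
      have W0 : 0 <= 2 * `|n| / (d * a) by rewrite divr_ge0 ?mulr_ge0 // ltW.
      have h1 : (`|n| * w) ^+ 2 <= (`|n| * (2 * `|n| / (d * a))) ^+ 2.
        have h0 : `|n| * w <= `|n| * (2 * `|n| / (d * a)) by rewrite ler_wpM2l.
        have h00 : 0 <= `|n| * w by rewrite mulr_ge0 // ltW.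
        nra.
      apply: (le_trans h1).
      have -> : (`|n| * (2 * `|n| / (d * a))) ^+ 2 = n ^+ 4 * (C2 / a ^+ 2).
        have -> : n ^+ 4 = `|n| ^+ 4 by rewrite (_ : 4%N = (2 * 2)%N) // !exprM nn2.
        rewrite /C2; field; rewrite ?gt_eqF //.
      rewrite /Qb lerDr mulr_ge0 // addr_ge0 // divr_ge0 ?(ltW a0) //; exact: C1_ge0.
    have hy2 : d * a * w < 2 * `|y| by lra.
    have [hc2|hc2] := leP `|c| (d * ta / k).
    +
      have hy := hBt hc2.
      set Z := e * K / s.
      have Z0 : 0 <= Z by rewrite divr_ge0 ?mulr_ge0 // ltW.
      have hy' : `|y| <= k * Z.
        apply: (le_trans hy); rewrite /Z.
        have -> : e * k / s * `|c| = k * (e / s) * `|c| by ring.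
        have -> : k * (e * K / s) = k * (e / s) * K by ring.
        rewrite ler_wpM2l // mulr_ge0 ?divr_ge0 // ltW //.
      have h1 : d * a * w ^+ 2 < 2 * Z.
        have : d * a * w * w < 2 * (k * Z) * w by rewrite ltr_pM2r //; lra.
        have -> : 2 * (k * Z) * w = 2 * Z * (k * w) by ring.
        by rewrite kw mulr1 => h; rewrite expr2 mulrA.
      have h2 : w ^+ 2 <= 2 * Z / (d * a).
        by rewrite ler_pdivlMr // mulrC; apply: ltW.
      have h3 : 2 * Z / (d * a) <= C1 / a.
        have -> : 2 * Z / (d * a) = (2 * e * K / (d * s)) / a.
          by rewrite /Z; field; rewrite ?gt_eqF.
        rewrite ler_pM2r ?invr_gt0 // /C1 lerDr; lra.
      apply: le_trans Qb1; rewrite exprMn nn2 ler_wpM2l //; exact: le_trans h2 h3.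
    +
      have W : w <= K / (d * ta).
        have h0 : d * ta * w < `|c| by [].
        rewrite ler_pdivlMr ?mulr_gt0 // mulrC; apply: ltW; exact: lt_le_trans h0 hc.
      have W2 : w ^+ 2 <= C3.
        rewrite /C3; have := ltW w0; nra.
      apply: (@le_trans _ _ (n ^+ 2 * C3)); first by rewrite exprMn nn2 ler_wpM2l.
      rewrite /Qb mulrDr -addrA addrC -addrA lerDl; apply: addr_ge0 => //.
      by rewrite mulr_ge0 // divr_ge0 ?(ltW a0) //; exact: C1_ge0.
  have : `|P - y| <= `|P - P0| + `|P0| + `|y|.
    have -> : P - y = (P - P0) + P0 - y by rewrite subrK.
    apply: (le_trans (ler_normB _ _)); rewrite lerD2r; exact: ler_normD.
  have ey : 0 <= e * `|y| by rewrite mulr_ge0 // ltW.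
  rewrite -mulrA (mulrC w) kw mulr1; lra.
have [kr|kr] := leP r k.
-
  exists (`|n| / r); split; first by rewrite divr_ge0 // ltW.
    rewrite expr_div_n rr nn2 /Qb.
    have : n ^+ 2 / a <= n ^+ 2 * (C1 / a) by rewrite ler_wpM2l //; nra.
    have : 0 <= n ^+ 2 * C3 by []. 
    rewrite mulrDr; lra.
  have h1 : `|P - y| <= `|P| + `|y| := ler_normB P y.
  have h2 : `|n| <= `|n| / r * k.
    have kr1 : 1 <= k / r by rewrite ler_pdivlMr // mul1r.
    have -> : `|n| / r * k = `|n| * (k / r) by rewrite mulrAC mulrA.
    nra.
  have ey : 0 <= e * `|y| by rewrite mulr_ge0 // ltW.
  lra.
have hP2 := hB hyn.
set q := k / r.
have q0 : 0 < q by rewrite divr_gt0.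
have q1 : q < 1 by rewrite ltr_pdivrMr // mul1r.
exists (e * `|n| / r); split; first by rewrite divr_ge0 ?mulr_ge0 // ltW.
  rewrite expr_div_n rr exprMn nn2 /Qb.
  have : e ^+ 2 * n ^+ 2 / a <= n ^+ 2 * (C1 / a).
    have hn : 0 <= n ^+ 2 * a^-1 by rewrite mulr_ge0 // ltW.
    nra.
  rewrite mulrDr; lra.
have h1 : `|P - y| <= `|P| + `|y| := ler_normB P y.
have -> : e * `|n| / r * k = e * q * `|n| by rewrite /q; field; rewrite gt_eqF.
have ekr : e * k / Num.sqrt a = e * q by rewrite /q mulrA.
rewrite ekr in hP2.
have eq0 : 0 <= e * q by rewrite mulr_ge0 // ltW.
have t1 : e * q * `|y + n| <= e * q * (`|y| + `|n|) by rewrite ler_wpM2l.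
have t2 : e * q * `|y| <= e * `|y|.
  rewrite -mulrA ler_wpM2l ?(ltW e0) //; rewrite ler_piMl //; exact: ltW.
have ey : 0 <= e * `|y| by rewrite mulr_ge0 // ltW.
lra.
Qed.
End Scal.

Lemma fsum_splitV (V : zmodType) (I : choiceType) (p : I -> V) (G F0 : {fset I}) :
  \sum_(i <- (G `|` F0)%fset) p i =
  \sum_(i <- F0) p i + \sum_(i <- G | i \notin F0) p i.
Proof.
rewrite (big_fsetID _ (mem F0) (G `|` F0)%fset) /=.
have -> : \sum_(i <- [fset x in (G `|` F0)%fset | x \in F0]%fset) p i = \sum_(i <- F0) p i.
  apply: eq_fbigl => i; rewrite !inE /=; apply/andP/idP => [[]//|iA].
  by rewrite iA orbT.
have -> : \sum_(i <- [fset x in (G `|` F0)%fset | x \notin F0]%fset) p i =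
   \sum_(i <- G | i \notin F0) p i.
  rewrite [RHS]big_fset_condE; apply: eq_fbigl => i; rewrite !inE /=.
  by case: (i \in F0); rewrite ?andbF ?andbT ?orbF.
by [].
Qed.

Lemma sum_filter_le (R : realType) (J : Type) (s : seq J) (P : pred J) (f : J -> R) :
  (forall i, 0 <= f i) -> \sum_(i <- s | P i) f i <= \sum_(i <- s) f i.
Proof.
move=> f0; rewrite [X in _ <= X](bigID P) /= lerDl; exact: sumr_ge0.
Qed.

Lemma sqrt_bound (R : realType) (x y : R) : 0 <= x -> x ^+ 2 <= y -> x <= Num.sqrt y.
Proof.
move=> x0 h; rewrite -(ger0_norm x0) -sqrtr_sqr; exact: ler_wsqrtr.
Qed.

Section HS.
Variables (R : realType) (I : choiceType).

Lemma hassum_ex (V : completeNormedModType R) (ub : I -> V) (b : R) :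
  0 <= b ->
  (forall (c : I -> R) (F : {fset I}),
     `|\sum_(i <- F) c i *: ub i| ^+ 2 <= b * \sum_(i <- F) c i ^+ 2) ->
  forall (c : I -> R) M, l2b c M -> exists x, HasSum (fun i => c i *: ub i) x.
Proof.
move=> b0 syn c M hc.
pose f := fun A : {fset I} => \sum_(i <- A) c i *: ub i.
suff : cvg (f @ totally) by move=> h; exists (lim (f @ totally)).
have PF : ProperFilter (f @ totally) by apply: fmap_proper_filter; exact: totally_filter.
apply: cauchy_cvg.
apply: (@cauchy_exP R V (f @ totally)) => eps eps0.
have e1 : 0 < eps ^+ 2 / (2 * (b + 1)) by rewrite divr_gt0 ?exprn_gt0 // mulr_gt0 //; lra.
have [A0 hA0] := tail_small (fun i => sqr_ge0 (c i)) hc e1.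
exists (f A0); exists A0 => // B /= A0B.
rewrite -ball_normE /=.
have eB : (B `|` A0)%fset = B by apply/fsetUidPl.
have : f B = f A0 + \sum_(i <- B | i \notin A0) c i *: ub i.
  by rewrite /f -fsum_splitV eB.
move=> ->; rewrite opprD addrA subrr sub0r normrN.
rewrite big_fset_condE.
set T := \sum_(i <- _) _.
have h1 := syn c [fset x in B | x \notin A0]%fset.
have h2 := hA0 B; rewrite big_fset_condE in h2.
have h3 : `|T| ^+ 2 < eps ^+ 2.
  apply: (le_lt_trans h1); apply: (le_lt_trans (ler_wpM2l b0 h2)).
  have -> : b * (eps ^+ 2 / (2 * (b + 1))) = eps ^+ 2 * (b / (2 * (b + 1))).
    by field; lra.
  rewrite gtr_pMr ?exprn_gt0 // ltr_pdivrMr ?mulr_gt0 //; lra.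
by move: h3; rewrite ltr_pXn2r // ?nnegrE // ltW.
Qed.
End HS.

#[local] Existing Instance totally_filter.

Lemma key (R : realType) (I : choiceType) (V : normedModType R) (ip : V -> V -> R)
  (Hip : inner_product ip) (ub : I -> V) (z : V) (ck xi Fi g : I -> R) (xk xd : V)
  (F0 : {fset I}) (eps G W : R) :
  HasSum (fun i => ck i *: ub i) xk -> HasSum (fun i => xi i *: ub i) xd ->
  (forall i, `|ck i - xi i| <= Fi i + g i) -> (forall i, 0 <= Fi i) ->
  (forall i, 0 <= g i) ->
  (forall F : {fset I}, \sum_(i <- F) g i ^+ 2 <= G) ->
  (forall F : {fset I}, \sum_(i <- F) ip (ub i) z ^+ 2 <= W) ->
  (forall F : {fset I}, \sum_(i <- F | i \notin F0) Fi i * `|ip (ub i) z| <= eps) ->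
  `|ip xk z - ip xd z| <=
    \sum_(i <- F0) `|ck i - xi i| * `|ip (ub i) z| + eps + Num.sqrt (G * W).
Proof.
move=> hk hd hE F0p g0 hG hW hT.
set w := fun i => ip (ub i) z.
set Ed := fun i => ck i - xi i.
have hD : HasSum (fun i => Ed i *: ub i) (xk - xd).
  have TF : Filter (@totally I) by apply: totally_filter.
  have := cvgB hk hd; move=> /(_ TF).
  apply: cvg_trans; apply: near_eq_cvg; near=> A.
  by rewrite !fctE -sumrB; apply: eq_bigr => i _; rewrite scalerBl.
apply/ler_addgt0Pr => eta eta0.
have z1 : 0 < `|z| + 1 by rewrite ltr_pwDr.
have eta1 : 0 < eta / (`|z| + 1) by rewrite divr_gt0.
have := proj1 (cvgrPdist_lt _ _) hD _ eta1.
case=> A0 _ /(_ A0 (fsubset_refl A0)) /= hA0.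
set S := \sum_(i <- A0) Ed i *: ub i.
have e1 : ip xk z - ip xd z = ip S z + ip (xk - xd - S) z.
  by rewrite -(ipDl Hip) (addrC S) subrK (ipBl Hip).
have e2 : `|ip (xk - xd - S) z| <= eta.
  apply: (le_trans (ipCS Hip _ _)).
  apply: (@le_trans _ _ (eta / (`|z| + 1) * `|z|)).
    by rewrite ler_wpM2r // ltW.
  rewrite -mulrA ler_piMr ?(ltW eta0) // ler_pdivrMl // mulr1 lerDl //.
have e3 : ip S z = \sum_(i <- A0) Ed i * w i.
  by rewrite /S (ip_suml Hip); apply: eq_bigr => i _; rewrite (ipZl Hip).
have e4 : `|ip S z| <= \sum_(i <- A0) `|Ed i| * `|w i|.
  rewrite e3; apply: (le_trans (ler_norm_sum _ _ _)).
  by apply: ler_sum => i _; rewrite normrM.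
have nn : forall i, 0 <= `|Ed i| * `|w i| by move=> i; rewrite mulr_ge0.
have e5 : \sum_(i <- A0) `|Ed i| * `|w i| =
   \sum_(i <- A0 | i \in F0) `|Ed i| * `|w i| + \sum_(i <- A0 | i \notin F0) `|Ed i| * `|w i|.
  exact: bigID.
have e6 : \sum_(i <- A0 | i \in F0) `|Ed i| * `|w i| <= \sum_(i <- F0) `|Ed i| * `|w i|.
  rewrite big_fset_condE; apply: fsum_sub => //.
  by apply/fsubsetP => i; rewrite !inE /= => /andP[].
have e7 : \sum_(i <- A0 | i \notin F0) `|Ed i| * `|w i| <=
   \sum_(i <- A0 | i \notin F0) Fi i * `|w i| + \sum_(i <- A0 | i \notin F0) g i * `|w i|.
  rewrite -big_split /=; apply: ler_sum => i _; rewrite -mulrDl.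
  by apply: ler_wpM2r => //; exact: hE.
have e8 : \sum_(i <- A0 | i \notin F0) g i * `|w i| <= \sum_(i <- A0) g i * `|w i|.
  by apply: sum_filter_le => i; rewrite mulr_ge0.
have e9 : \sum_(i <- A0) g i * `|w i| <= Num.sqrt (G * W).
  apply: sqrt_bound; first by apply: sumr_ge0 => i _; rewrite mulr_ge0.
  apply: (le_trans (sumCS2 _ _ _)).
  have G0 : 0 <= \sum_(i <- A0) g i ^+ 2 by apply: sumr_ge0 => i _; exact: sqr_ge0.
  have W0 : 0 <= \sum_(i <- A0) `|w i| ^+ 2 by apply: sumr_ge0 => i _; exact: sqr_ge0.
  apply: (le_trans (ler_wpM2l G0 (_ : _ <= W))).
    by apply: (le_trans _ (hW A0)); apply: ler_sum => i _; rewrite real_normK ?num_real.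
  apply: ler_wpM2r (hG A0).
  apply: (le_trans W0); apply: (le_trans _ (hW A0)); apply: ler_sum => i _.
  by rewrite real_normK ?num_real.
have e10 := hT A0.
rewrite e1; apply: (le_trans (ler_normD _ _)).
have := ler_normD (ip S z) (ip (xk - xd - S) z).
lra.
Unshelve. all: by end_near.
Qed.

Lemma cvg_pos_right (R : realType) (a : nat -> R) :
  (forall k, 0 < a k) -> a @ \oo --> 0 -> a @ \oo --> 0^'+.
Proof.
move=> ap ac P /= hP; have := ac _ hP.
by move=> [N _ HN]; exists N => // n /HN /=; apply; exact: ap.
Qed.

Lemma cvg_fsum0 (R : realType) (J : Type) (s : seq J) (f : J -> nat -> R) :
  (forall i, f i @ \oo --> 0) -> (fun k => \sum_(i <- s) f i k) @ \oo --> 0.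
Proof.
move=> h; elim: s => [|j s IH].
  by apply: cvg_near_cst; near=> k; rewrite big_nil. 
have -> : (fun k => \sum_(i <- j :: s) f i k) = (fun k => f j k + \sum_(i <- s) f i k).
  by apply: funext => k; rewrite big_cons.
by rewrite -[X in _ --> X](addr0 0); exact: cvgD.
Unshelve. all: by end_near.
Qed.

Lemma sum_sq_le (R : realType) (J : Type) (s : seq J) (a : J -> R) :
  (forall i, 0 <= a i) -> \sum_(i <- s) a i ^+ 2 <= (\sum_(i <- s) a i) ^+ 2.
Proof.
move=> a0; elim: s => [|j s IH]; first by rewrite !big_nil expr0n.
rewrite !big_cons; have S0 : 0 <= \sum_(i <- s) a i by apply: sumr_ge0.
have := a0 j; nra.
Qed.

Lemma squeeze0 (R : realType) (f h : nat -> R) :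
  (forall k, 0 <= f k <= h k) -> h @ \oo --> 0 -> f @ \oo --> 0.
Proof.
move=> fh hc; apply: (@squeeze_cvgr _ _ _ _ (fun=> 0) h f).
- by near=> k; exact: fh.
- exact: cvg_cst.
- exact: hc.
Unshelve. all: by end_near.
Qed.

Lemma cvg_cM0 (R : realType) (c : R) (f : nat -> R) :
  f @ \oo --> 0 -> (fun k => c * f k) @ \oo --> 0.
Proof. by move=> h; rewrite -(mulr0 c); exact: (cvgM (cvg_cst c) h). Qed.
Lemma cvg_D0 (R : realType) (f h : nat -> R) :
  f @ \oo --> 0 -> h @ \oo --> 0 -> (fun k => f k + h k) @ \oo --> 0.
Proof. by move=> hf hh; rewrite -(addr0 0); exact: (cvgD hf hh). Qed.
Lemma cvg_M0 (R : realType) (f h : nat -> R) :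
  f @ \oo --> 0 -> h @ \oo --> 0 -> (fun k => f k * h k) @ \oo --> 0.
Proof. by move=> hf hh; rewrite -(mulr0 0); exact: (cvgM hf hh). Qed.
Lemma cvg_eqf (R : realType) (f h : nat -> R) :
  (forall k, f k = h k) -> f @ \oo --> 0 -> h @ \oo --> 0.
Proof. by move=> e; have -> : f = h by apply: funext. Qed.

Unset Implicit Arguments.
Theorem theorem4p11 (R : realType)
  (X Y : completeNormedModType R)
  (ipX : X -> X -> R) (ipY : Y -> Y -> R)
  (A : {linear X -> Y}) (I : countType)
  (u ubar : I -> X) (v : I -> Y) (kappa : I -> R)
  (phi : R -> R -> R -> R)
  (delta alpha : nat -> R) (y : Y) (yk : nat -> Y) (alpha_t : R) :
  inner_product ipX -> inner_product ipY ->
  continuous A ->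
  is_DFD ipX ipY A u v kappa ->
  (exists M : R, forall i, kappa i <= M) ->
  is_dual_frame ipX (kerperp ipX A) u ubar ->
  nonlinear_reg_filter phi ->
  assumption_B phi ->
  (forall k, 0 < delta k) -> delta @ \oo --> 0 ->
  (forall k, 0 < alpha k) -> alpha @ \oo --> 0 ->
  (fun k => delta k ^+ 2 / alpha k) @ \oo --> 0 ->
  range A y ->
  0 < alpha_t ->
  (exists c : I -> R, in_l2 c /\
     forall i, phi alpha_t (kappa i) (c i) = ipY y (v i)) ->
  (forall k, `|yk k - y| <= delta k) ->
  exists xk : nat -> X,
    (forall k, B_value ipY ubar v kappa phi (alpha k) (yk k) (xk k)) /\
    forall xdag, MP_value ipX A y xdag -> weak_cvg ipX xk xdag.
Proof.
move=> hX hY Acont [fu fv kp adj] _ [fub dual] Fil [_ [d [e [d0 e0 B2]]]]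
  dpos dcvg apos acvg dacvg [x0 _ yx0] at0 [c [cl2 cphi]] ykd.
have [bu [bu0 hbu]] := frame_ub fu.
have besu := bessel hX (kerperp_subsp A hX) fu.1 (ltW bu0) hbu.
have [bv [bv0 hbv]] := frame_ub fv.
have besv := bessel hY (closed_range_subsp A) fv.1 (ltW bv0) hbv.
have [bb [bb0 hbb]] := frame_ub fub.
have besb := bessel hX (kerperp_subsp A hX) fub.1 (ltW bb0) hbb.
have synb := synth hX (kerperp_subsp A hX) fub.1 (ltW bb0) hbb.
have [Mc hMc] := in_l2_l2b cl2.
set K := 1 + Mc.
have Mc0 : 0 <= Mc by have := hMc fset0%fset; rewrite big_seq_fset0.
have K0 : 0 <= K by rewrite /K; lra.
have cK : forall i, `|c i| <= K.
  move=> i; apply: sq_le1; rewrite real_normK ?num_real //.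
  by have := hMc [fset i]%fset; rewrite big_seq_fset1.
pose yi i := ipY y (v i).
pose xi i := (kappa i)^-1 * yi i.
have xiE : forall x, A x = y -> forall i, xi i = ipX x (u i).
  move=> x Ax i; rewrite /xi /yi -Ax adj mulrA mulVf ?mul1r //; exact: lt0r_neq0.
set Mx := bu * `|x0| ^+ 2.
have xil2 : forall F : {fset I}, \sum_(i <- F) xi i ^+ 2 <= Mx.
  move=> F; apply: le_trans (besu x0 F); apply: ler_sum => i _.
  by rewrite (xiE x0 yx0).
pose nk k i := ipY (yk k - y) (v i).
pose N k := bv * delta k ^+ 2.
have nkl2 : forall k (F : {fset I}), \sum_(i <- F) nk k i ^+ 2 <= N k.
  move=> k F; apply: (le_trans (besv _ F)); rewrite ler_wpM2l ?(ltW bv0) //.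
  rewrite ler_sqr ?nnegrE ?(ltW (dpos k)) //.
have hL : forall a k0 s t, 0 < a -> 0 < k0 ->
    `|phi a k0 s - phi a k0 t| <= `|s - t|.
  by move=> a k0 s t a0 k1; have [_ L _ _] := Fil a k0 a0 k1; exact: L.
have hb : forall a k0 s, 0 < a -> 0 < k0 -> `|phi a k0 s| <= `|s|.
  move=> a k0 s a0 k1; have [_ _ P0 _] := Fil a k0 a0 k1.
  by have := hL a k0 s 0 a0 k1; rewrite P0 !subr0.
pose ck k i := (kappa i)^-1 * phi (alpha k) (kappa i) (ipY (yk k) (v i)).
have ykE : forall k i, ipY (yk k) (v i) = yi i + nk k i.
  by move=> k i; rewrite /nk (ipBl hY) /yi addrCA subrr addr0.
have gex : forall p : nat * I, exists g, [/\ 0 <= g,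
    g ^+ 2 <= Qb d e alpha_t K (alpha p.1) (nk p.1 p.2) &
    `|ck p.1 p.2 - xi p.2| <= (e + 2) * `|xi p.2| + g].
  case=> k i /=.
  have a0 := apos k; have k1 := kp i.
  have hPL : `|phi (alpha k) (kappa i) (yi i + nk k i) - phi (alpha k) (kappa i) (yi i)|
      <= `|nk k i|.
    by have := hL _ _ (yi i + nk k i) (yi i) a0 k1; rewrite (addrC (yi i)) addrK.
  have hBt := B2 _ _ (c i) k1 at0; rewrite cphi in hBt.
  have [g [g0 gQ gE]] := scalar_bound d0 e0 at0 K0 a0 k1
    (hb _ _ (yi i + nk k i) a0 k1) (hb _ _ (yi i) a0 k1) hPL
    (B2 _ _ _ k1 a0) hBt (cK i).
  exists g; split => //.
  have -> : ck k i - xi i =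
      (phi (alpha k) (kappa i) (yi i + nk k i) - yi i) / kappa i.
    by rewrite /ck ykE /xi; ring.
  have -> : xi i = yi i / kappa i by rewrite /xi mulrC.
  exact: gE.
have [gf hg] := choice gex.
pose g k i := gf (k, i).
pose Gk k := (C1 d e alpha_t K / alpha k + C3 d alpha_t K) * N k +
   (C2 d / alpha k ^+ 2) * N k ^+ 2.
have gl2 : forall k (F : {fset I}), \sum_(i <- F) g k i ^+ 2 <= Gk k.
  move=> k F.
  have h1 : \sum_(i <- F) g k i ^+ 2 <= \sum_(i <- F) Qb d e alpha_t K (alpha k) (nk k i).
    by apply: ler_sum => i _; have [_ h _] := hg (k, i).
  apply: (le_trans h1); rewrite /Qb big_split /= -!mulr_suml.
  set S2 := \sum_(i <- F) nk k i ^+ 2.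
  have S20 : 0 <= S2 by apply: sumr_ge0 => i _; exact: sqr_ge0.
  have S2N := nkl2 k F.
  have S4 : \sum_(i <- F) nk k i ^+ 4 <= N k ^+ 2.
    have -> : \sum_(i <- F) nk k i ^+ 4 = \sum_(i <- F) (nk k i ^+ 2) ^+ 2.
      by apply: eq_bigr => i _; rewrite -exprM.
    apply: (le_trans (sum_sq_le _ _)); first by move=> i; exact: sqr_ge0.
    rewrite -/S2 ler_sqr ?nnegrE //; exact: le_trans S2N.
  have a0 := apos k.
  have c1 : 0 <= C1 d e alpha_t K / alpha k + C3 d alpha_t K.
    rewrite addr_ge0 ?C3_ge // divr_ge0 ?(ltW a0) //; exact: C1_ge0.
  have c2 : 0 <= C2 d / alpha k ^+ 2 by rewrite divr_ge0 ?C2_ge // sqr_ge0.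
  rewrite /Gk (mulrC _ (N k)) (mulrC _ (N k ^+ 2)).
  apply: lerD; exact: ler_wpM2r.
have ckl2 : forall k, l2b (ck k) (2 * (e + 3) ^+ 2 * Mx + 2 * Gk k).
  move=> k F.
  have h1 : \sum_(i <- F) ck k i ^+ 2 <=
      \sum_(i <- F) (2 * (e + 3) ^+ 2 * xi i ^+ 2 + 2 * g k i ^+ 2).
    apply: ler_sum => i _; have [g0 _ gE] := hg (k, i).
    rewrite -/(g k i) in g0 gE.
    have h : `|ck k i| <= (e + 3) * `|xi i| + g k i.
      have := ler_normD (ck k i - xi i) (xi i); rewrite subrK; lra.
    have x0' := normr_ge0 (xi i); have c0 := normr_ge0 (ck k i).
    rewrite -[ck k i ^+ 2]real_normK ?num_real // -[xi i ^+ 2]real_normK ?num_real //.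
    have e3 : 0 <= e + 3 by lra.
    have ex : 0 <= (e + 3) * `|xi i| by rewrite mulr_ge0.
    set Ax := (e + 3) * `|xi i|.
    have s1 : `|ck k i| ^+ 2 <= (Ax + g k i) ^+ 2 by rewrite ler_sqr ?nnegrE // addr_ge0.
    have s2 : (Ax + g k i) ^+ 2 <= 2 * Ax ^+ 2 + 2 * g k i ^+ 2.
      have := sqr_ge0 (Ax - g k i); rewrite !expr2; lra.
    have : Ax ^+ 2 = (e + 3) ^+ 2 * `|xi i| ^+ 2 by rewrite exprMn.
    lra.
  apply: (le_trans h1); rewrite big_split /= -!mulr_sumr.
  apply: lerD; rewrite ler_wpM2l //; first by rewrite mulr_ge0 // sqr_ge0.
have phil2 : forall k, l2b (fun i => phi (alpha k) (kappa i) (ipY (yk k) (v i)))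
    (bv * `|yk k| ^+ 2).
  move=> k F; apply: (le_trans _ (besv (yk k) F)); apply: ler_sum => i _.
  have := hb (alpha k) (kappa i) (ipY (yk k) (v i)) (apos k) (kp i).
  set p := phi _ _ _; set q := ipY _ _ => h.
  rewrite -[p ^+ 2]real_normK ?num_real // -[q ^+ 2]real_normK ?num_real //.
  by rewrite ler_sqr ?nnegrE.
have := fun k => hassum_ex (ltW bb0) synb (ckl2 k).
move/choice => [xk hxk].
exists xk; split.
  move=> k; split; first split.
  - exact: l2b_in_l2 (phil2 k).
  - exact: l2b_in_l2 (ckl2 k).
  - exact: hxk k.
move=> xdag [Kd Ad] z.
have hd : HasSum (fun i => xi i *: ubar i) xdag.
  have := dual xdag Kd.
  have -> // : (fun i => ipX xdag (u i) *: ubar i) = (fun i => xi i *: ubar i).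
  by apply: funext => i; rewrite (xiE xdag Ad).
set W := bb * `|z| ^+ 2.
have hW : forall F : {fset I}, \sum_(i <- F) ipX (ubar i) z ^+ 2 <= W.
  move=> F; apply: le_trans (besb z F); apply: ler_sum => i _.
  by rewrite (ipC hX).
have W0 : 0 <= W by rewrite mulr_ge0 ?(ltW bb0) // sqr_ge0.
pose Fi i := (e + 2) * `|xi i|.
have e2 : 0 <= e + 2 by lra.
have Fi0 : forall i, 0 <= Fi i by move=> i; rewrite mulr_ge0.
have p0 : forall i, 0 <= Fi i * `|ipX (ubar i) z| by move=> i; rewrite mulr_ge0.
have pM : forall F : {fset I}, \sum_(i <- F) Fi i * `|ipX (ubar i) z| <=
    1 + ((e + 2) ^+ 2 * Mx) * W.
  move=> F; apply: sq_le1; apply: (le_trans (sumCS2 _ _ _)).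
  have s1 : \sum_(i <- F) Fi i ^+ 2 <= (e + 2) ^+ 2 * Mx.
    rewrite /Fi; under eq_bigr do rewrite exprMn.
    rewrite -mulr_sumr ler_wpM2l ?sqr_ge0 //.
    apply: le_trans (xil2 F); apply: ler_sum => i _.
    by rewrite real_normK ?num_real.
  have s2 : \sum_(i <- F) `|ipX (ubar i) z| ^+ 2 <= W.
    apply: le_trans (hW F); apply: ler_sum => i _.
    by rewrite real_normK ?num_real.
  have s10 : 0 <= \sum_(i <- F) Fi i ^+ 2 by apply: sumr_ge0 => i _; exact: sqr_ge0.
  apply: (le_trans (ler_wpM2l s10 s2)); exact: ler_wpM2r.
apply/cvgrPdist_le => eps eps0.
have eps3 : 0 < eps / 3 by rewrite divr_gt0.
have [F0 hF0] := tail_small p0 pM eps3.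
have lim1 : (fun k => \sum_(i <- F0) `|ck k i - xi i| * `|ipX (ubar i) z|) @ \oo --> 0.
  apply: (@cvg_fsum0 _ _ _ (fun i k => `|ck k i - xi i| * `|ipX (ubar i) z|)) => i.
  have [_ _ _ F4] := Fil 1 (kappa i) ltr01 (kp i).
  have hq : (fun k => phi (alpha k) (kappa i) (yi i)) @ \oo --> yi i.
    exact: (@cvg_comp _ _ _ alpha (fun a => phi a (kappa i) (yi i)) _ _ _ (cvg_pos_right apos acvg) (F4 (yi i))).
  have hq2 : (fun k => `|phi (alpha k) (kappa i) (yi i) - yi i|) @ \oo --> 0.
    have := cvg_norm (cvgB hq (cvg_cst (yi i))); rewrite subrr normr0; exact.
  pose h k := (kappa i)^-1 * (delta k * `|v i| + `|phi (alpha k) (kappa i) (yi i) - yi i|)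
     * `|ipX (ubar i) z|.
  apply: (@squeeze0 _ _ h); last first.
    rewrite /h; apply: (@cvg_eqf _ (fun k => `|ipX (ubar i) z| * ((kappa i)^-1 *
      (`|v i| * delta k + `|phi (alpha k) (kappa i) (yi i) - yi i|)))).
      by move=> k; ring.
    apply: cvg_cM0; apply: cvg_cM0; apply: cvg_D0 => //; exact: cvg_cM0.
  move=> k; apply/andP; split; first by rewrite mulr_ge0.
  rewrite /h ler_wpM2r //.
  have -> : ck k i - xi i = (kappa i)^-1 *
     (phi (alpha k) (kappa i) (yi i + nk k i) - yi i) by rewrite /ck ykE /xi; ring.
  have ki : 0 < (kappa i)^-1 by rewrite invr_gt0.
  rewrite normrM (gtr0_norm ki) ler_wpM2l ?(ltW ki) //.
  have h1 := hL _ _ (yi i + nk k i) (yi i) (apos k) (kp i).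
  have ee : yi i + nk k i - yi i = nk k i by rewrite addrAC subrr add0r.
  rewrite ee in h1.
  have h2 : `|nk k i| <= delta k * `|v i|.
    apply: (le_trans (ipCS hY _ _)); rewrite ler_wpM2r //.
  have := ler_normD (phi (alpha k) (kappa i) (yi i + nk k i) - phi (alpha k) (kappa i) (yi i))
    (phi (alpha k) (kappa i) (yi i) - yi i).
  rewrite addrA subrK; lra.
have lim2 : (fun k => Num.sqrt (Gk k * W)) @ \oo --> 0.
  have d2 : (fun k => delta k ^+ 2) @ \oo --> 0.
    apply: (@cvg_eqf _ (fun k => delta k * delta k)) => [k|]; first by rewrite expr2.
    exact: cvg_M0.
  have hG : (fun k => Gk k * W) @ \oo --> 0.
    apply: (@cvg_eqf _ (fun k => W * (C1 d e alpha_t K * bv * (delta k ^+ 2 / alpha k) +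
       C3 d alpha_t K * bv * delta k ^+ 2 +
       C2 d * bv ^+ 2 * ((delta k ^+ 2 / alpha k) * (delta k ^+ 2 / alpha k))))).
      move=> k; rewrite /Gk /N; have := apos k => a0; field; exact: lt0r_neq0.
    apply: cvg_cM0; apply: cvg_D0; first apply: cvg_D0.
    - exact: cvg_cM0.
    - exact: cvg_cM0.
    - by apply: cvg_cM0; apply: cvg_M0.
  have sc : (@Num.sqrt R) @ (0:R) --> Num.sqrt 0 := @sqrt_continuous R 0.
  rewrite sqrtr0 in sc.
  exact: (@cvg_comp _ _ _ (fun k => Gk k * W) (@Num.sqrt R) _ _ _ hG sc).
move/cvgrPdist_le: lim1 => /(_ _ eps3) n1.
move/cvgrPdist_le: lim2 => /(_ _ eps3) n2.
have : \forall k \near \oo, `|ipX xdag z - ipX (xk k) z| <= eps.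
  apply: filterS2 n1 n2 => k h1 h2.
  have hE : forall i, `|ck k i - xi i| <= Fi i + g k i.
    by move=> i; have [_ _ h] := hg (k, i).
  have g0 : forall i, 0 <= g k i by move=> i; have [h _ _] := hg (k, i).
  have hk := key hX (hxk k) hd hE Fi0 g0 (gl2 k) hW (hF0).
  rewrite !sub0r !normrN in h1 h2.
  have hS : 0 <= \sum_(i <- F0) `|ck k i - xi i| * `|ipX (ubar i) z|.
    by apply: sumr_ge0 => i _; rewrite mulr_ge0.
  rewrite distrC.
  have : eps / 3 + eps / 3 + eps / 3 = eps by field.
  move: h1 h2; rewrite (ger0_norm hS) (ger0_norm (sqrtr_ge0 _)).
  lra.
by [].
Qed.
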